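(* Let $C$ be an octonion algebra over a field $k$ with $\mathrm{char}(k)\neq2$, and $G=\mathrm{Aut}(C)$. Let $s,t\in G(k)$ be elements of order $2$, and let $D$ (resp. $D'$) be the quaternion subalgebra of $C$ fixed elementwise by $t$ (resp. $s$). Then $s$ and $t$ are conjugate in $G(k)$ if and only if $D\cong D'$ as $k$-algebras.
   Context: An octonion algebra is an $8$-dimensional composition algebra, i.e. a unital $k$-algebra with a nondegenerate multiplicative quadratic form $N$. A quaternion subalgebra is a $4$-dimensional composition subalgebra containing the identity. Every element of order $2$ in $\mathrm{Aut}(C)$ fixes elementwise exactly a quaternion subalgebra $D$ (its $+1$-eigenspace) and acts by $-1$ on $D^\perp$. *)

(* Defs.v *)
From HB Require Import structures.
From mathcomp Require Import all_boot all_order all_algebra.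
Set Implicit Arguments. Unset Strict Implicit. Unset Printing Implicit Defensive.
Import Order.TTheory GRing.Theory Num.Theory.
Local Open Scope ring_scope.

Section Octonions.
Variables (k : fieldType) (V : vectType k).

Definition bilinear_mul (mul : V -> V -> V) : Prop :=
  (forall (a : k) x y z, mul (a *: x + y) z = a *: mul x z + mul y z) /\
  (forall (a : k) x y z, mul z (a *: x + y) = a *: mul z x + mul z y).

Definition polar (N : V -> k) (x y : V) : k := N (x + y) - N x - N y.

Definition quadratic_form (N : V -> k) : Prop :=
  (forall (a : k) x, N (a *: x) = a ^+ 2 * N x) /\
  (forall (a : k) x y z, polar N (a *: x + y) z = a * polar N x z + polar N y z).

Definition nondegenerate (N : V -> k) : Prop :=
  forall x, (forall y, polar N x y = 0) -> x = 0.

Definition composition_algebra (mul : V -> V -> V) (e : V) (N : V -> k) : Prop :=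
  [/\ bilinear_mul mul,
      (forall x, mul e x = x /\ mul x e = x),
      quadratic_form N,
      nondegenerate N &
      (forall x y, N (mul x y) = N x * N y)].

Definition octonion_algebra (mul : V -> V -> V) (e : V) (N : V -> k) : Prop :=
  composition_algebra mul e N /\ \dim (fullv : {vspace V}) = 8%N.

Definition is_aut (mul : V -> V -> V) (f : 'End(V)) : Prop :=
  bijective (fun_of_lfun f) /\ (forall x y, f (mul x y) = mul (f x) (f y)).

Definition aut_order2 (mul : V -> V -> V) (f : 'End(V)) : Prop :=
  is_aut mul f /\ (f \o f = \1)%VF /\ f != \1%VF.

Definition conj_in_Aut (mul : V -> V -> V) (s t : 'End(V)) : Prop :=
  exists g : 'End(V), is_aut mul g /\ (s \o g = g \o t)%VF.

(* The subalgebras D and D' (sub-vector spaces closed under mul, containing e)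
   are isomorphic as k-algebras: there is a k-linear map D -> D' (restriction
   of a linear endomorphism of V) that is bijective onto D', multiplicative
   and unital. *)
Definition alg_iso (mul : V -> V -> V) (e : V) (D D' : {vspace V}) : Prop :=
  exists g : 'End(V),
    [/\ (g @: D)%VS = D',
        (forall x, x \in D -> g x = 0 -> x = 0),
        (forall x y, x \in D -> y \in D -> g (mul x y) = mul (g x) (g y)) &
        g e = e].

End Octonions.

(* Main.v *)
Require Import Defs.
From HB Require Import structures.
From mathcomp Require Import all_boot all_order all_algebra.
From mathcomp Require Import ring.
From Stdlib Require Import Classical.
Import GRing.Theory.
Local Open Scope ring_scope.

Section Comp.
Variables (k : fieldType) (V : vectType k) (mul : V -> V -> V) (e : V) (N : V -> k).
Hypothesis hchar : (2%:R : k) != 0.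
Hypothesis hbil : bilinear_mul mul.
Hypothesis hunit : forall x, mul e x = x /\ mul x e = x.
Hypothesis hquad : quadratic_form N.
Hypothesis hnd : Defs.nondegenerate N.
Hypothesis hmult : forall x y, N (mul x y) = N x * N y.

Local Notation pol := (polar N).

Lemma mZDl a x y z : mul (a *: x + y) z = a *: mul x z + mul y z.
Proof. by case: hbil. Qed.
Lemma mZDr a x y z : mul z (a *: x + y) = a *: mul z x + mul z y.
Proof. by case: hbil. Qed.
Lemma dbl0 (x : V) : x = x + x -> x = 0.
Proof. by move/(congr1 (fun v => v - x)); rewrite addrK subrr => ->. Qed.
Lemma m0l z : mul 0 z = 0.
Proof. apply: dbl0; have := mZDl 1 0 0 z; rewrite !scale1r addr0; apply. Qed.
Lemma m0r z : mul z 0 = 0.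
Proof. apply: dbl0; have := mZDr 1 0 0 z; rewrite !scale1r addr0; apply. Qed.
Lemma mDl x y z : mul (x + y) z = mul x z + mul y z.
Proof. by have := mZDl 1 x y z; rewrite !scale1r. Qed.
Lemma mDr x y z : mul z (x + y) = mul z x + mul z y.
Proof. by have := mZDr 1 x y z; rewrite !scale1r. Qed.
Lemma mZl a x z : mul (a *: x) z = a *: mul x z.
Proof. by have := mZDl a x 0 z; rewrite m0l !addr0. Qed.
Lemma mZr a x z : mul z (a *: x) = a *: mul z x.
Proof. by have := mZDr a x 0 z; rewrite m0r !addr0. Qed.
Lemma mNl x z : mul (- x) z = - mul x z.
Proof. by rewrite -scaleN1r mZl scaleN1r. Qed.
Lemma mNr x z : mul z (- x) = - mul z x.
Proof. by rewrite -scaleN1r mZr scaleN1r. Qed.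
Lemma mBl x y z : mul (x - y) z = mul x z - mul y z.
Proof. by rewrite mDl mNl. Qed.
Lemma mBr x y z : mul z (x - y) = mul z x - mul z y.
Proof. by rewrite mDr mNr. Qed.

Lemma NZ a x : N (a *: x) = a ^+ 2 * N x.
Proof. by case: hquad. Qed.
Lemma N0 : N 0 = 0.
Proof. by rewrite -(scale0r 0) NZ expr0n mul0r. Qed.
Lemma NN x : N (- x) = N x.
Proof. by rewrite -scaleN1r NZ sqrrN expr1n mul1r. Qed.
Lemma polC x y : pol x y = pol y x.
Proof. rewrite /polar (addrC x y); ring. Qed.
Lemma polZDl a x y z : pol (a *: x + y) z = a * pol x z + pol y z.
Proof. by case: hquad. Qed.
Lemma pol0l z : pol 0 z = 0.
Proof. by rewrite /polar add0r N0 subr0 subrr. Qed.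
Lemma pol0r z : pol z 0 = 0.
Proof. by rewrite polC pol0l. Qed.
Lemma polDl x y z : pol (x + y) z = pol x z + pol y z.
Proof. by have := polZDl 1 x y z; rewrite scale1r mul1r. Qed.
Lemma polZl a x z : pol (a *: x) z = a * pol x z.
Proof. by have := polZDl a x 0 z; rewrite pol0l !addr0. Qed.
Lemma polNl x z : pol (- x) z = - pol x z.
Proof. by rewrite -scaleN1r polZl mulN1r. Qed.
Lemma polBl x y z : pol (x - y) z = pol x z - pol y z.
Proof. by rewrite polDl polNl. Qed.
Lemma polDr x y z : pol z (x + y) = pol z x + pol z y.
Proof. by rewrite polC polDl !(polC z). Qed.
Lemma polZr a x z : pol z (a *: x) = a * pol z x.
Proof. by rewrite polC polZl polC. Qed.
Lemma polNr x z : pol z (- x) = - pol z x.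
Proof. by rewrite polC polNl polC. Qed.
Lemma polBr x y z : pol z (x - y) = pol z x - pol z y.
Proof. by rewrite polDr polNr. Qed.
Lemma ND x y : N (x + y) = N x + N y + pol x y.
Proof. rewrite /polar; ring. Qed.
Lemma polxx x : pol x x = 2%:R * N x.
Proof.
rewrite /polar; have -> : x + x = 2%:R *: x by rewrite scaler_nat mulr2n.
rewrite NZ; ring.
Qed.


Lemma lincomb1 (L R F G c : k) : L - R = c * (F - G) -> F = G -> L = R.
Proof. by move=> h hFG; apply/eqP; rewrite -subr_eq0 h hFG subrr mulr0. Qed.
Lemma lincomb2 (L R F1 G1 F2 G2 c1 c2 : k) :
  L - R = c1 * (F1 - G1) + c2 * (F2 - G2) -> F1 = G1 -> F2 = G2 -> L = R.
Proof. by move=> h h1 h2; apply/eqP; rewrite -subr_eq0 h h1 h2 !subrr !mulr0 addr0. Qed.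

Lemma nd_eq x y : (forall z, pol x z = pol y z) -> x = y.
Proof.
move=> h; apply/eqP; rewrite -subr_eq0; apply/eqP; apply: hnd => z.
by rewrite polBl h subrr.
Qed.

Ltac psimp := rewrite ?(mDl, mDr, mBl, mBr, mZl, mZr, mNl, mNr,
  polDl, polBl, polZl, polNl, polDr, polBr, polZr, polNr, pol0l, pol0r, m0l, m0r).

Hypothesis hne : exists x : V, x != 0.

Lemma mel x : mul e x = x. Proof. by case: (hunit x). Qed.
Lemma mer x : mul x e = x. Proof. by case: (hunit x). Qed.

Lemma Ne1 : N e = 1.
Proof.
have h : N e * (N e - 1) = 0.
  by rewrite mulrBr mulr1 -hmult mel subrr.
move/eqP: h; rewrite mulf_eq0 subr_eq0 => /orP [/eqP h0|/eqP //].
case: hne => x /eqP; case; apply: hnd => y.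
have hN0 v : N v = 0 by rewrite -(mel v) hmult h0 mul0r.
by rewrite /polar !hN0 !subr0.
Qed.

Lemma pol_mul_l x y z : pol (mul x y) (mul x z) = N x * pol y z.
Proof. rewrite /polar -mDr !hmult; ring. Qed.
Lemma pol_mul_r x y z : pol (mul y x) (mul z x) = pol y z * N x.
Proof. rewrite /polar -mDl !hmult; ring. Qed.

Lemma lin3 x y w z : pol (mul x y) (mul w z) + pol (mul w y) (mul x z) = pol x w * pol y z.
Proof.
have h := pol_mul_l (x + w) y z.
rewrite !(mDl, polDl, polDr) !pol_mul_l ND in h.
apply: (@lincomb1 _ _ _ _ 1 _ h); rewrite (polC (mul w y) (mul x z)); ring.
Qed.

Lemma lin3r x y w z : pol (mul y x) (mul z w) + pol (mul y w) (mul z x) = pol y z * pol x w.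
Proof.
have h := pol_mul_r (x + w) y z.
rewrite !(mDr, polDl, polDr) !pol_mul_r ND in h.
apply: (@lincomb1 _ _ _ _ 1 _ h); rewrite (polC (mul y w) (mul z x)); ring.
Qed.

Definition cj x := polar N x e *: e - x.

Lemma pee : pol e e = 2%:R. Proof. by rewrite polxx Ne1 mulr1. Qed.

Lemma adj_l x y z : pol (mul x y) z = pol y (mul (cj x) z).
Proof.
have h := lin3 x y e z; rewrite !mel in h.
rewrite /cj mBl mZl mel polBr polZr.
apply: (@lincomb1 _ _ _ _ 1 _ h); rewrite (polC (mul x y)) (polC y (mul x z)); ring.
Qed.

Lemma adj_r x y z : pol (mul y x) z = pol y (mul z (cj x)).
Proof.
have h := lin3r x y e z; rewrite !mer in h.
rewrite /cj mBr mZr mer polBr polZr.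
apply: (@lincomb1 _ _ _ _ 1 _ h); rewrite (polC (mul y x)) (polC y (mul z x)); ring.
Qed.

Lemma cjK x : cj (cj x) = x.
Proof.
rewrite /cj polBl polZl pee.
have -> : (pol x e * 2%:R - pol x e) = pol x e by rewrite mulr_natr mulr2n addrK.
by rewrite opprB addrC subrK.
Qed.

Lemma cj_left x y : mul (cj x) (mul x y) = N x *: y.
Proof. apply: nd_eq => z; by rewrite adj_l cjK pol_mul_l polZl. Qed.

Lemma cj_right x y : mul (mul y x) (cj x) = N x *: y.
Proof. apply: nd_eq => z; by rewrite adj_r cjK pol_mul_r polZl mulrC. Qed.

Lemma quad x : mul x x = pol x e *: x - N x *: e.
Proof.
have h := cj_left x e; rewrite mer /cj mBl mZl mel in h.
by rewrite -h opprB addrC subrK.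
Qed.

Lemma lin_quad x y : mul x y + mul y x = pol x e *: y + pol y e *: x - pol x y *: e.
Proof.
have h := quad (x + y); rewrite !(mDl, mDr) quad quad ND in h.
apply: nd_eq => z.
have hz := congr1 (fun v => pol v z) h; cbv beta in hz.
psimp; rewrite !(polDl, polBl, polNl, polZl, polDr) in hz.
apply: (@lincomb1 _ _ _ _ 1 _ hz); ring.
Qed.

Lemma cjD x y : cj (x + y) = cj x + cj y.
Proof. by rewrite /cj polDl scalerDl opprD addrACA. Qed.
Lemma cjZ a x : cj (a *: x) = a *: cj x.
Proof. by rewrite /cj polZl scalerBr scalerA. Qed.
Lemma cje : cj e = e.
Proof. by rewrite /cj pee scaler_nat mulr2n addrK. Qed.
Lemma Ncj x : N (cj x) = N x.
Proof.
rewrite /cj ND NZ NN Ne1 polZl polNr (polC e x); ring.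
Qed.

Section CD.
Variables (D : {vspace V}) (a : V).
Hypothesis heD : e \in D.
Hypothesis hDm : forall x y, x \in D -> y \in D -> mul x y \in D.
Hypothesis haD : forall d, d \in D -> pol d a = 0.

Lemma cjD_in x : x \in D -> cj x \in D.
Proof. by move=> hx; rewrite /cj memvB // memvZ. Qed.
Lemma pae : pol a e = 0. Proof. by rewrite polC haD. Qed.
Lemma cja : cj a = - a. Proof. by rewrite /cj pae scale0r add0r. Qed.

Lemma cd_b x : x \in D -> mul x a = mul a (cj x).
Proof.
move=> hx; have h := lin_quad x a.
rewrite pae haD // !scale0r addr0 subr0 in h.
by rewrite /cj mBr mZr mer -h addrK.
Qed.

Lemma cd_c x y : x \in D -> y \in D -> mul x (mul y a) = mul (mul y x) a.
Proof.
move=> hx hy; apply: nd_eq => z.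
have h1 := lin3 y a (cj x) z.
have h2 := lin3 a x y z.
rewrite (cd_b _ (cjD_in _ hx)) cjK in h1.
rewrite (polC a y) haD // mul0r in h2.
have h3 := lin_quad a z; rewrite pae scale0r add0r in h3.
have h4 := adj_r x y e; rewrite mel in h4.
have h5 : pol (mul y x) a = 0 by rewrite haD // hDm.
rewrite adj_l [RHS]adj_r cja mNr polNr.
have -> : mul z a = (pol z e *: a - pol a z *: e) - mul a z by rewrite -h3 addrC addKr.
rewrite polBr polBr !polZr h5 h4 mulr0 sub0r.
apply: (@lincomb2 _ _ _ _ _ _ 1 (-1) _ h1 h2).
rewrite (polC (mul a x)) (polC a z); ring.
Qed.

Lemma cd_d x y : x \in D -> y \in D -> mul (mul x a) y = mul (mul x (cj y)) a.
Proof.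
move=> hx hy; apply: nd_eq => z.
have h1 := lin3r a x (cj y) z.
rewrite (polC a (cj y)) haD ?cjD_in // mulr0 in h1.
rewrite [LHS]adj_r [RHS]adj_r cja mNr polNr.
apply: (@lincomb1 _ _ _ _ 1 _ h1); ring.
Qed.

Lemma cd_e y v : y \in D -> v \in D ->
  mul (mul y a) (mul v a) = - N a *: mul (cj v) y.
Proof.
move=> hy hv; apply: nd_eq => z.
have hva : pol (mul v a) e = 0.
  by rewrite adj_r mel cja polNr haD // oppr0.
have hcj : cj (mul v a) = - mul v a by rewrite /cj hva scale0r add0r.
have h1 := lin3 y a z (mul v a).
rewrite (cd_c _ _ hy hv) pol_mul_r in h1.
have h2 := pol_mul_r a v e; rewrite mel in h2.
rewrite (polC a (mul v a)) h2 in h1.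
rewrite adj_r hcj mNr polNr polZl /cj mBl mZl mel polBl polZl.
apply: (@lincomb1 _ _ _ _ (-1) _ h1).
rewrite (polC y z) (polC (mul v y) z); ring.
Qed.

Lemma Dperp_a y d : y \in D -> d \in D -> pol (mul y a) d = 0.
Proof.
move=> hy hd; have h := lin3 y a e d; rewrite !mel in h.
by rewrite (polC a (mul y d)) (haD _ (hDm _ _ hy hd)) (polC a d) (haD _ hd) mulr0 addr0 in h.
Qed.

Lemma N_cd x y : x \in D -> y \in D -> N (x + mul y a) = N x + N y * N a.
Proof. by move=> hx hy; rewrite ND hmult polC Dperp_a // addr0. Qed.

Lemma prod_cd x y u v : x \in D -> y \in D -> u \in D -> v \in D ->
  mul (x + mul y a) (u + mul v a) =
  (mul x u - N a *: mul (cj v) y) + mul (mul v x + mul y (cj u)) a.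
Proof.
move=> hx hy hu hv.
rewrite mDl !mDr (cd_c _ _ hx hv) (cd_d _ _ hy hu) (cd_e _ _ hy hv).
apply: nd_eq => w; psimp; ring.
Qed.

End CD.

Lemma sub4 (a b c d : V) : (a - c) - (b - d) = (a - b) - (c - d).
Proof. by rewrite !opprB !addrA (addrAC a (-c) d) (addrAC a (-b) d) (addrAC (a + d)). Qed.

Lemma e_neq0 : e != 0.
Proof. by apply/eqP => h; have := Ne1; rewrite h N0 => /eqP; rewrite eq_sym oner_eq0. Qed.

Lemma N_pres (U : {vspace V}) (f : 'End(V)) :
  e \in U -> (forall x y, x \in U -> y \in U -> mul x y \in U) ->
  (forall x y, x \in U -> y \in U -> f (mul x y) = mul (f x) (f y)) ->
  (forall x, x \in U -> f x = 0 -> x = 0) -> f e = e ->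
  forall x, x \in U -> N (f x) = N x.
Proof.
move=> heU hUm hfm hinj hfe x hx.
have h1 := hfm x x hx hx; rewrite quad [RHS]quad linearB !linearZ /= hfe in h1.
have h2 : (pol x e - pol (f x) e) *: f x = (N x - N (f x)) *: e.
  rewrite !scalerN in h1; apply/eqP; rewrite -subr_eq0 (scalerBl (pol x e)) (scalerBl (N x)) sub4 h1 subrr //.
have [a0|anz] := eqVneq (pol x e - pol (f x) e) 0.
  move: h2; rewrite a0 scale0r => /esym/eqP; rewrite scaler_eq0 (negbTE e_neq0) orbF.
  by rewrite subr_eq0 => /eqP.
set c := (N x - N (f x)) / (pol x e - pol (f x) e).
have hfx : f x = c *: e by rewrite /c mulrC -scalerA -h2 scalerA mulVf // scale1r.
have : x - c *: e = 0.
  apply: hinj; first by rewrite memvB // memvZ.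
  by rewrite linearB linearZ /= hfe hfx subrr.
by move/eqP; rewrite subr_eq0 => /eqP ->; rewrite linearZ /= hfe.
Qed.

Lemma mk_lfun (f : V -> V) : (forall (a : k) x y, f (a *: x + y) = a *: f x + f y) ->
  exists h : 'End(V), forall x, h x = f x.
Proof.
move=> hf.
pose fl := GRing.isLinear.Build k V V *:%R f hf.
pose F : {linear V -> V} := HB.pack f fl.
by exists (linfun F) => x; rewrite lfunE.
Qed.

Lemma pol_pres (U : {vspace V}) (f : 'End(V)) :
  (forall x, x \in U -> N (f x) = N x) ->
  forall x y, x \in U -> y \in U -> pol (f x) (f y) = pol x y.
Proof.
move=> hf x y hx hy; rewrite /polar -linearD /= !hf // memvD //.
Qed.

Definition refl (w x : V) := x - (polar N x w / N w) *: w.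

Lemma refl_lfun w : exists h : 'End(V), forall x, h x = refl w x.
Proof.
apply: mk_lfun => a x y; apply: nd_eq => z; rewrite /refl.
psimp; rewrite ?scalerBr ?scalerA; psimp; ring.
Qed.

Lemma two_neq0 : (2%:R : k) != 0. Proof. exact: hchar. Qed.

Lemma refl_iso w x : N w != 0 -> N (refl w x) = N x.
Proof.
move=> hw; rewrite /refl ND NN NZ polNr polZr; field; exact: hw.
Qed.

Lemma refl_fix w x : pol x w = 0 -> refl w x = x.
Proof. by move=> h; rewrite /refl h mul0r scale0r subr0. Qed.

Lemma refl_move (v w : V) : N v = N w -> N v != 0 ->
  exists rho : 'End(V), [/\ forall x, N (rho x) = N x, rho w = v &
     forall z, pol z v = 0 -> pol z w = 0 -> rho z = z].
Proof.
move=> hvw hv0.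
have [hd|hd] := eqVneq (N (v - w)) 0; last first.
  have [r hr] := refl_lfun (v - w); exists r; split.
  - by move=> x; rewrite hr refl_iso.
  - rewrite hr; apply: nd_eq => z; rewrite /refl; psimp.
    have e1 : N (v - w) = N v + N w - pol v w by rewrite ND NN polNr; ring.
    have e2 : pol w v = pol v w by rewrite polC.
    rewrite e2 polxx -hvw; rewrite e1 -hvw in hd *.
    by field.
  - by move=> z h1 h2; rewrite hr refl_fix // polBr h1 h2 subrr.
have hs : N (v + w) != 0.
  have e1 : N (v - w) = N v + N w - pol v w by rewrite ND NN polNr; ring.
  rewrite ND -hvw; rewrite e1 -hvw in hd.
  have -> : N v + N v + pol v w = 4%:R * N v - (N v + N v - pol v w) by ring.
  rewrite hd subr0 mulf_neq0 //.
  by rewrite (_ : 4%:R = 2%:R * 2%:R :> k) ?mulf_neq0 // -natrM.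
have [r1 hr1] := refl_lfun (v + w); have [r2 hr2] := refl_lfun v.
exists (r2 \o r1)%VF; split.
- by move=> x; rewrite comp_lfunE hr2 hr1 !refl_iso.
- rewrite comp_lfunE hr1.
  have -> : refl (v + w) w = - v.
    apply: nd_eq => z; rewrite /refl; psimp.
    rewrite polxx (polC w v) ND -hvw; move: hs; rewrite ND -hvw => hs; by field.
  rewrite hr2; apply: nd_eq => z; rewrite /refl; psimp.
  by rewrite polxx; field.
- move=> z h1 h2; rewrite comp_lfunE hr1 refl_fix; last by rewrite polDr h1 h2 addr0.
  by rewrite hr2 refl_fix.
Qed.

Definition ndeg_on (U : {vspace V}) :=
  forall x, x \in U -> (forall y, y \in U -> polar N x y = 0) -> x = 0.

Lemma witt n : forall (U : {vspace V}) (sg : 'End(V)), (\dim U <= n)%N -> ndeg_on U ->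
  (forall x, x \in U -> N (sg x) = N x) ->
  exists Psi : 'End(V), (forall x, N (Psi x) = N x) /\ (forall x, x \in U -> Psi x = sg x).
Proof.
elim: n => [|n IH] U sg hdim hU hsg.
  exists \1%VF; split=> [x|x hx]; first by rewrite lfunE.
  move: hdim; rewrite leqn0 dimv_eq0 => /eqP hU0.
  by move: hx; rewrite hU0 memv0 => /eqP ->; rewrite !linear0.
have [hU0|hUnz] := eqVneq U 0%VS.
  exists \1%VF; split=> [x|x hx]; first by rewrite lfunE.
  by move: hx; rewrite hU0 memv0 => /eqP ->; rewrite !linear0.
have [u [hu hNu]] : exists u, u \in U /\ N u != 0.
  apply: NNPP => hno.
  have hN y : y \in U -> N y = 0.
    move=> hy; case: (eqVneq (N y) 0) => // hy0; exfalso; apply: hno; by exists y.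
  move: hUnz; rewrite -vpick0 => /eqP; apply; apply: hU; first exact: memv_pick.
  by move=> y hy; rewrite /polar (hN _ (memvD (memv_pick U) hy)) (hN _ (memv_pick U)) (hN _ hy) !subr0.
have hu0 : u != 0 by apply: contraNneq hNu => ->; rewrite N0.
have [l hl] : exists l : 'End(V), forall x, l x = pol x u *: u.
  by apply: mk_lfun => a x y; rewrite polZDl scalerDl scalerA.
set U0 := (U :&: lker l)%VS.
have memU0 x : (x \in U0) = (x \in U) && (pol x u == 0).
  by rewrite memv_cap memv_ker hl scaler_eq0 (negbTE hu0) orbF.
have hpuu : pol u u != 0 by rewrite polxx mulf_neq0.
have hneq : U0 != U.
  apply/eqP => hE; move: hu; rewrite -hE memU0 => /andP [_ /eqP h].
  by move: hpuu; rewrite h eqxx.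
have hdim0 : (\dim U0 <= n)%N.
  have hlt : (\dim U0 < \dim U)%N.
    by rewrite (ltn_leqif (dimv_leqif_eq (capvSl U (lker l)))) hneq.
  by rewrite -ltnS (leq_trans hlt hdim).
have dec x : x \in U -> x - (pol x u / pol u u) *: u \in U0.
  move=> hx; rewrite memU0 memvB ?memvZ //=; apply/eqP.
  by rewrite polBl polZl; field.
have hU0nd : ndeg_on U0.
  move=> x; rewrite memU0 => /andP [hx /eqP hxu] hy; apply: hU => // y hyU.
  have := hy _ (dec y hyU); by rewrite polBr polZr hxu mulr0 subr0.
have [psi [hpsi1 hpsi2]] := IH U0 sg hdim0 hU0nd (fun x hx => hsg x (memv_capP hx).1).
have hvw : N (sg u) = N (psi u) by rewrite hpsi1 hsg.
have hv0 : N (sg u) != 0 by rewrite hsg.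
have [rho [hr1 hr2 hr3]] := refl_move (sg u) (psi u) hvw hv0.
exists (rho \o psi)%VF; split=> [x|x hx]; first by rewrite comp_lfunE hr1 hpsi1.
have hx0 := dec x hx.
set c := pol x u / pol u u in hx0 *; set x0 := x - c *: u in hx0 *.
have -> : x = x0 + c *: u by rewrite /x0 subrK.
have hx0U : x0 \in U by move: hx0; rewrite memU0 => /andP [].
have hx0u : pol x0 u = 0 by move: hx0; rewrite memU0 => /andP [_ /eqP].
clearbody x0; rewrite comp_lfunE !linearD !linearZ /= hr2 (hpsi2 _ hx0) hr3 //.
  by rewrite (pol_pres U sg hsg x0 u hx0U hu) hx0u.
by rewrite -(hpsi2 _ hx0) (pol_pres fullv psi (fun x _ => hpsi1 x) x0 u (memvf _) (memvf _)) hx0u.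
Qed.

Lemma aut_e {f : 'End(V)} : is_aut mul f -> f e = e.
Proof.
case=> [[g hg1 hg2] hm].
have hl y : mul (f e) y = y by rewrite -[y]hg2 -hm mel.
by rewrite -[f e]mer hl.
Qed.

Lemma aut_inj0 {f : 'End(V)} : is_aut mul f -> forall x, f x = 0 -> x = 0.
Proof.
case=> hb _ x hx; apply: (bij_inj hb); by rewrite hx linear0.
Qed.

Lemma aut_N {f : 'End(V)} : is_aut mul f -> forall x, N (f x) = N x.
Proof.
move=> hf x; apply: (N_pres fullv); rewrite ?memvf //.
- by move=> y z _ _; rewrite memvf.
- by move=> y z _ _; case: hf.
- by move=> y _; apply: aut_inj0.
- exact: aut_e.
Qed.

Lemma aut_pol {f : 'End(V)} : is_aut mul f -> forall x y, pol (f x) (f y) = pol x y.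
Proof. by move=> hf x y; rewrite (pol_pres fullv f (fun x _ => aut_N hf x)) ?memvf. Qed.

Lemma aut_cj {f : 'End(V)} : is_aut mul f -> forall x, f (cj x) = cj (f x).
Proof.
move=> hf x; rewrite /cj linearB linearZ /= aut_e //.
congr (_ *: _ - _); by rewrite -[in RHS](aut_e hf) aut_pol.
Qed.

Section Inv.
Variable t : 'End(V).
Hypothesis ht : aut_order2 mul t.

Lemma t_aut : is_aut mul t. Proof. by case: ht. Qed.
Lemma t_mul x y : t (mul x y) = mul (t x) (t y). Proof. by case: t_aut => _ ->. Qed.
Lemma tt x : t (t x) = x.
Proof. by case: ht => _ [/lfunP/(_ x) h _]; rewrite comp_lfunE id_lfunE in h. Qed.

Local Notation D := (fixedSpace t).

Lemma inD x : (x \in D) = (t x == x).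
Proof. by apply/fixedSpaceP/eqP. Qed.

Lemma eD : e \in D. Proof. by rewrite inD (aut_e t_aut). Qed.
Lemma Dmul x y : x \in D -> y \in D -> mul x y \in D.
Proof. by rewrite !inD => /eqP hx /eqP hy; rewrite t_mul hx hy. Qed.

Lemma DE_orth x y : x \in D -> t y = - y -> pol x y = 0.
Proof.
rewrite inD => /eqP hx hy.
have h : pol x y = - pol x y by rewrite -{1}(aut_pol t_aut x y) hx hy polNr.
have : 2%:R * pol x y = 0 by rewrite mulr_natl mulr2n {1}h addNr.
by move/eqP; rewrite mulf_eq0 (negbTE hchar) /= => /eqP.
Qed.

Definition Pt x := 2%:R^-1 *: (x + t x).
Definition Qt x := 2%:R^-1 *: (x - t x).

Lemma PQ x : x = Pt x + Qt x.
Proof.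
rewrite /Pt /Qt -scalerDr addrACA subrr addr0 -mulr2n -scaler_nat scalerA mulVf //.
by rewrite scale1r.
Qed.
Lemma PD x : Pt x \in D.
Proof. by rewrite inD /Pt linearZ linearD /= tt addrC. Qed.
Lemma tQ x : t (Qt x) = - Qt x.
Proof. by rewrite /Qt linearZ linearB /= tt -scalerN opprB. Qed.

Lemma Dnd : ndeg_on D.
Proof.
move=> x hx hy; apply: hnd => z.
by rewrite (PQ z) polDr hy ?PD // (DE_orth _ _ hx (tQ z)) addr0.
Qed.

Lemma perpE y : (forall d, d \in D -> pol d y = 0) -> t y = - y.
Proof.
move=> hy.
have hP : Pt y = 0.
  apply: hnd => z; rewrite (PQ z) polDr.
  rewrite (DE_orth _ _ (PD y) (tQ z)) addr0.
  have := PQ y; move/(congr1 (fun v => pol v (Pt z))).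
  rewrite polDl (polC y) hy ?PD // (polC (Qt y)) (DE_orth _ _ (PD z) (tQ y)) addr0.
  by move=> h; rewrite -h.
move: hP; rewrite /Pt => /eqP; rewrite scaler_eq0 invr_eq0 (negbTE hchar) /=.
by rewrite addr_eq0 => /eqP h; rewrite {2}h opprK.
Qed.

Lemma exists_a : exists a, t a = - a /\ N a != 0.
Proof.
apply: NNPP => hno.
have hN y : t y = - y -> N y = 0.
  move=> hy; case: (eqVneq (N y) 0) => // hy0; exfalso; apply: hno; by exists y.
case: ht => _ [_]; apply/negP; rewrite negbK; apply/eqP/lfunP => x.
rewrite id_lfunE.
have hq : Qt x = 0.
  apply: hnd => z; rewrite (PQ z) polDr (polC (Qt x) (Pt z)) (DE_orth _ _ (PD z) (tQ x)) add0r.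
  rewrite /polar !hN ?subrr ?subr0 //; [exact: tQ | exact: tQ | by rewrite linearD /= !tQ opprD].
move: hq; rewrite /Qt => /eqP; rewrite scaler_eq0 invr_eq0 (negbTE hchar) /=.
by rewrite subr_eq0 => /eqP <-.
Qed.

Lemma PQ_split x w : t x = x -> t w = - w -> Pt (x + w) = x /\ Qt (x + w) = w.
Proof.
move=> hx hw; rewrite /Pt /Qt (linearD t) /= hx hw; split.
  rewrite addrACA subrr addr0 -mulr2n -scaler_nat scalerA mulVf // scale1r //.
rewrite opprD opprK addrACA subrr add0r -mulr2n -scaler_nat scalerA mulVf // scale1r //.
Qed.

End Inv.


Section Main.
Variables s t : 'End(V).
Hypothesis hs : aut_order2 mul s.
Hypothesis ht : aut_order2 mul t.
Local Notation D := (fixedSpace t).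
Local Notation D' := (fixedSpace s).

Lemma main_rev : alg_iso mul e D D' -> conj_in_Aut mul s t.
Proof.
case=> phi [himg hinj hmulphi hphie].
have phiD x : x \in D -> phi x \in D' by move=> hx; rewrite -himg memv_img.
have hNphi := N_pres D phi (eD t ht) (Dmul t ht) hmulphi hinj hphie.
have [Phi [hPhi1 hPhi2]] := witt (\dim D) D phi (leqnn _) (Dnd t ht) hNphi.
have [a [hta hNa]] := exists_a t ht.
set a' := Phi a.
have hNa' : N a' = N a := hPhi1 a.
have haperp : forall d, d \in D -> pol d a = 0 := fun d hd => DE_orth t ht d a hd hta.
have ha'perp : forall d, d \in D' -> pol d a' = 0.
  move=> d; rewrite -himg => /memv_imgP [x hx ->].
  rewrite -(hPhi2 x hx) (pol_pres fullv Phi (fun x _ => hPhi1 x) x a (memvf _) (memvf _)).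
  exact: haperp.
have hsa' : s a' = - a' := perpE s hs a' ha'perp.
have phicj x : x \in D -> phi (cj x) = cj (phi x).
  move=> hx; rewrite /cj linearB linearZ /= hphie; congr (_ *: _ - _).
  by rewrite -[in RHS]hphie (pol_pres D phi hNphi x e hx (eD t ht)).
have [Ra hRa] : exists h : 'End(V), forall x, h x = mul x a'.
  by apply: mk_lfun => c x y; rewrite mZDl.
have [Rc hRc] : exists h : 'End(V), forall x, h x = mul x (cj a).
  by apply: mk_lfun => c x y; rewrite mZDl.
pose g := ((phi \o (2%:R^-1 *: (\1 + t))) + (Ra \o (phi \o (((N a)^-1 *: Rc) \o (2%:R^-1 *: (\1 - t))))))%VF.
have gE z : g z = phi (Pt t z) + mul (phi ((N a)^-1 *: mul (Qt t z) (cj a))) a'.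
  by rewrite /g !(add_lfunE, comp_lfunE, scale_lfunE, opp_lfunE, id_lfunE) hRa hRc /Pt /Qt.
have hcja : t (cj a) = - cj a.
  by rewrite (aut_cj (t_aut t ht)) hta -scaleN1r cjZ scaleN1r.
have tya y : y \in D -> t (mul y a) = - mul y a.
  by rewrite inD => /eqP hy; rewrite (t_mul t ht) hy hta mNr.
have gcd x y : x \in D -> y \in D -> g (x + mul y a) = phi x + mul (phi y) a'.
  move=> hx hy; rewrite gE; have [-> ->] := PQ_split t x (mul y a) (fixedSpaceP hx) (tya y hy).
  by rewrite (cj_right a y) scalerA mulVf // scale1r.
have dec z : exists x y, [/\ x \in D, y \in D & z = x + mul y a].
  exists (Pt t z), ((N a)^-1 *: mul (Qt t z) (cj a)); split.
  - exact: PD t ht _.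
  - rewrite inD linearZ /= (t_mul t ht) (tQ t ht) hcja mNl mNr opprK //.
  - have := cj_right (cj a) (Qt t z); rewrite cjK Ncj => h.
    by rewrite mZl h scalerA mulVf // scale1r -PQ.
have DM := Dmul t ht; have cjin := cjD_in D (eD t ht).
have hmul z1 z2 : g (mul z1 z2) = mul (g z1) (g z2).
  have [x [y [hx hy ->]]] := dec z1; have [u [v [hu hv ->]]] := dec z2.
  rewrite (prod_cd D a (eD t ht) (Dmul t ht) haperp x y u v hx hy hu hv).
  have hX : mul x u - N a *: mul (cj v) y \in D by rewrite memvB ?memvZ ?DM ?cjin.
  have hY : mul v x + mul y (cj u) \in D by rewrite memvD ?DM ?cjin.
  rewrite !gcd //.
  rewrite (prod_cd D' a' (eD s hs) (Dmul s hs) ha'perp) ?phiD //.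
  rewrite linearB linearZ linearD /= !hmulphi ?cjin // !phicj // hNa' //.
have gN z : N (g z) = N z.
  have [x [y [hx hy ->]]] := dec z.
  rewrite gcd // (N_cd D' a' (Dmul s hs) ha'perp) ?phiD // !hNphi // hNa'.
  by rewrite (N_cd D a (Dmul t ht) haperp).
have hker : lker g == 0%VS.
  apply/lker0P => x y hxy; apply/eqP; rewrite -subr_eq0; apply/eqP; apply: hnd => w.
  rewrite -(pol_pres fullv g (fun x _ => gN x) _ w (memvf _) (memvf _)).
  by rewrite linearB /= hxy subrr pol0l.
exists g; split.
  split=> //; exact: (Bijective (lker0_lfunK hker) (lker0_lfunVK hker)).
apply/lfunP => z; rewrite !comp_lfunE.
have [x [y [hx hy ->]]] := dec z.
rewrite (linearD t) /= (fixedSpaceP hx) tya // -mNl !gcd ?memvN //.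
rewrite (linearD s) /= (fixedSpaceP (phiD x hx)).
case: (hs) => [[_ hsm] _]; rewrite hsm (fixedSpaceP (phiD y hy)) hsa'.
by rewrite mNr linearN /= mNl.
Qed.

Lemma main_fwd : conj_in_Aut mul s t -> alg_iso mul e D D'.
Proof.
case=> g [hg hc]; have [hb hgm] := hg.
have hc' x : s (g x) = g (t x).
  by move/lfunP: hc => /(_ x); rewrite !comp_lfunE.
exists g; split.
- apply/eqP; rewrite eqEsubv; apply/andP; split; apply/subvP => y.
    case/memv_imgP => x hx ->; apply/fixedSpaceP; by rewrite hc' (fixedSpaceP hx).
  move/fixedSpaceP => hy; case: hb => gi hgi1 hgi2.
  rewrite -(hgi2 y); apply: memv_img; apply/fixedSpaceP; apply: (bij_inj (hg.1)).
  by rewrite -hc' hgi2.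
- by move=> x _; apply: aut_inj0.
- by move=> x y _ _; apply: hgm.
- exact: aut_e.
Qed.
End Main.
End Comp.


Theorem mainTheorem2 (k : fieldType) (V : vectType k)
    (mul : V -> V -> V) (e : V) (N : V -> k)
    (hchar : (2%:R : k) != 0)
    (hC : octonion_algebra mul e N)
    (s t : 'End(V)) (hs : aut_order2 mul s) (ht : aut_order2 mul t) :
  conj_in_Aut mul s t <-> alg_iso mul e (fixedSpace t) (fixedSpace s).
Proof.
case: hC => [[hbil hunit hquad hnd hmult] hdim].
have hne : exists x : V, x != 0.
  exists (vpick fullv); rewrite vpick0; apply/eqP => h.
  by move: hdim; rewrite h dimv0.
split; first exact: (@main_fwd k V mul e hunit s t).
exact: (@main_rev k V mul e N hchar hbil hunit hquad hnd hmult hne s t hs ht).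
Qed.
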